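(* Let $G$ be a countable discrete group acting minimally by homeomorphisms on a compact Hausdorff space $X$, and fix $x\in X$. There is a net $(\mu_\lambda)\subseteq P_f(G,C(X))$ such that for every $\nu\in P(X)$, $\nu\mu_\lambda\to\delta_x$ in the weak* topology.
   Context: Minimal means every orbit is dense; $(g\cdot f)(y)=f(g^{-1}y)$ on $C(X)$. $P(X)$ is the set of regular Borel probability measures on $X$, identified with states on $C(X)$. A generalized $(G,C(X))$-probability measure is a formal sum $\mu=\sum_{i\in I}f_is_if_i$ with $I$ an index set, $s_i\in G$ (repetitions allowed), $f_i\in C(X)$, $f_i\ge0$, $f_i\ne0$, $\sum_if_i^2=1$; $P_f(G,C(X))$ is the set of these with $I$ finite. For $h\in C(X)$, $\mu h=\sum_if_i^2(s_i\cdot h)$, and $(\nu\mu)(h)=\nu(\mu h)$. *)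

(* Defs.v *)
From Stdlib Require List.
From HB Require Import structures.
From mathcomp Require Import all_boot all_order all_algebra.
From mathcomp Require Import all_classical all_reals all_analysis.
Import numFieldNormedType.Exports.
Set Implicit Arguments. Unset Strict Implicit. Unset Printing Implicit Defensive.
Import Order.TTheory GRing.Theory Num.Theory.
Local Open Scope ring_scope.
Local Open Scope classical_set_scope.

Definition is_group (G : Type) (mul : G -> G -> G) (one : G) (inv : G -> G) :=
  [/\ forall a b c, mul a (mul b c) = mul (mul a b) c,
      forall a, mul one a = a, forall a, mul a one = a,
      forall a, mul (inv a) a = one & forall a, mul a (inv a) = one].

(* A (left) action of G on X by homeomorphisms: each act g is continuous,
   act one = id, act (g h) = act g \o act h (hence act g has continuous
   inverse act (inv g)). *)
Definition is_action_by_homeos (G : Type) (mul : G -> G -> G) (one : G)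
  (X : topologicalType) (act : G -> X -> X) :=
  [/\ forall g, continuous (act g),
      forall y, act one y = y &
      forall g h y, act (mul g h) y = act g (act h y)].

Definition minimal_action (G : Type) (X : topologicalType) (act : G -> X -> X) :=
  forall y : X, closure [set act g y | g in [set: G]] = [set: X].

(* States on C(X) (real-valued continuous functions), identified with P(X). *)
Definition is_state (R : realType) (X : topologicalType) (phi : (X -> R) -> R) :=
  [/\ forall f g : X -> R, continuous f -> continuous g ->
        phi (fun y => f y + g y) = phi f + phi g,
      forall (a : R) (f : X -> R), continuous f -> phi (fun y => a * f y) = a * phi f,
      forall f : X -> R, continuous f -> (forall y, 0 <= f y) -> 0 <= phi f &
      phi (fun _ => 1) = 1].

(* A finitely supported generalized (G, C(X))-probability measure
   sum_i f_i s_i f_i, encoded as the finite list of pairs (s_i, f_i). *)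
Definition is_gen_prob_fin (R : realType) (G : Type) (X : topologicalType)
  (mu : seq (G * (X -> R))) :=
  [/\ forall p, List.In p mu -> continuous p.2,
      forall p, List.In p mu -> forall y, 0 <= p.2 y,
      forall p, List.In p mu -> exists y, p.2 y != 0 &
      forall y, \sum_(p <- mu) (p.2 y) ^+ 2 = 1].

(* mu h = sum_i f_i^2 (s_i . h), with (g . h)(y) = h (g^{-1} y). *)
Definition gen_apply (R : realType) (G : Type) (X : topologicalType)
  (inv : G -> G) (act : G -> X -> X) (mu : seq (G * (X -> R))) (h : X -> R)
  : X -> R :=
  fun y => \sum_(p <- mu) (p.2 y) ^+ 2 * h (act (inv p.1) y).

Definition directed (D : Type) (le : D -> D -> Prop) :=
  [/\ inhabited D, forall a, le a a,
      forall a b c, le a b -> le b c -> le a c &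
      forall a b, exists c, le a c /\ le b c].

(* Main.v *)
From HB Require Import structures.
Require Import Defs.
From mathcomp Require Import all_boot all_order all_algebra.
From mathcomp Require Import all_classical all_reals all_analysis.
From mathcomp Require Import finmap.
Import numFieldNormedType.Exports.
Import Order.TTheory GRing.Theory Num.Theory.
Local Open Scope ring_scope.
Local Open Scope classical_set_scope.
Lemma sum_cont (R : realType) (X : topologicalType) (J : Type) (s : seq J)
  (F : J -> X -> R) : (forall j, continuous (F j)) ->
  continuous (fun z => \sum_(j <- s) F j z).
Proof.
move=> cF; elim: s => [|a s IH].
  under eq_fun do rewrite big_nil. by move=> z; apply: cvg_cst.
under eq_fun do rewrite big_cons.
move=> z; exact: (cvgD (cF a z) (IH z)).
Qed.

Lemma le_sum_mem (R : realType) (J : eqType) (s : seq J) (F : J -> R) y :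
  (forall j, 0 <= F j) -> y \in s -> F y <= \sum_(j <- s) F j.
Proof.
move=> F0; elim: s => // a s IH; rewrite inE big_cons => /orP[/eqP->|ys].
  by rewrite lerDl sumr_ge0.
by apply: le_trans (IH ys) _; rewrite lerDr.
Qed.

Lemma In_map {A B : Type} {f : A -> B} {s : seq A} {p} :
  List.In p (map f s) -> exists a, List.In a s /\ p = f a.
Proof.
elim: s => //= a s IH [<-|/IH[b [H ->]]]; first by exists a; auto.
by exists b; auto.
Qed.

Lemma In_mem (A : eqType) (s : seq A) a : List.In a s -> a \in s.
Proof.
elim: s => //= b s IH [->|/IH H]; first by rewrite inE eqxx.
by rewrite inE H orbT.
Qed.

Lemma inv_inv (G : Type) (mul : G -> G -> G) one inv :
  is_group mul one inv -> forall a, inv (inv a) = a.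
Proof.
case=> A L1 R1 LV RV a.
by rewrite -[inv (inv a)]R1 -(LV a) A (LV (inv a)) L1.
Qed.
Lemma orbit_hit (G : Type) mul one inv (X : topologicalType) (act : G -> X -> X)
  (hG : is_group mul one inv) (hmin : minimal_action act) (U : set X) :
  open U -> U !=set0 -> forall y, exists g, U (act (inv g) y).
Proof.
move=> oU [u Uu] y.
have : closure [set act g y | g in [set: G]] u by rewrite hmin.
move=> /(_ U (open_nbhs_nbhs (conj oU Uu))) [z [[g _ <-] Uz]].
by exists (inv g); rewrite (@inv_inv _ _ _ _ hG).
Qed.

Lemma separate (R : realType) (X : topologicalType) :
  hausdorff_space X -> compact [set: X] ->
  forall A B : set X, closed A -> closed B -> A `&` B = set0 ->
  exists f : X -> R, [/\ continuous f, forall z, 0 <= f z <= 1,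
     forall z, A z -> f z = 0 & forall z, B z -> f z = 1].
Proof.
move=> hT hX A B cA cB AB.
have hN := compact_normal hT hX.
have := (proj1 (@normal_separatorP R X) hN) A B cA cB AB.
move=> /(@uniform_separatorP X R) [f [cf rf fA fB]].
exists f; split => //.
- move=> z; have : `[0, 1]%classic (f z) by apply: rf; exists z.
  by rewrite /= in_itv.
- by move=> z Az; apply: fA; exists z.
- by move=> z Bz; apply: fB; exists z.
Qed.
Lemma pou (R : realType) (G : Type) mul one inv (X : topologicalType)
  (act : G -> X -> X) (hG : is_group mul one inv)
  (hX : compact [set: X]) (hT : hausdorff_space X)
  (hact : is_action_by_homeos mul one act)
  (hmin : minimal_action act) (U : set X) :
  open U -> U !=set0 -> exists mu : seq (G * (X -> R)), is_gen_prob_fin mu /\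
   (forall p, List.In p mu -> forall y, p.2 y != 0 -> U (act (inv p.1) y)).
Proof.
move=> oU U0.
case: hact => hcont hone hmul.
have [gy Hgy] := choice (@orbit_hit _ _ _ _ _ _ hG hmin _ oU U0).
pose W y := act (inv (gy y)) @^-1` U.
have oW y : open (W y) := open_comp (fun z _ => hcont (inv (gy y)) z) oU.
have sepy : forall y, exists f : X -> R, [/\ continuous f,
    forall z, 0 <= f z <= 1, forall z, (~` W y) z -> f z = 0
    & forall z, [set y] z -> f z = 1].
  move=> y; apply: separate => //.
  - exact: open_closedC.
  - by apply: accessible_closed_set1; apply: hausdorff_accessible.
  - rewrite -subset0 => z [nWz zy]; apply: nWz; rewrite zy; exact: Hgy.
have [phi Hphi] := choice sepy.
have cphi y : continuous (phi y) by case: (Hphi y).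
have phi01 y z : 0 <= phi y z <= 1 by case: (Hphi y).
have phi0 y z : ~ W y z -> phi y z = 0 by case: (Hphi y) => _ _ H _; apply: H.
have phi1 y : phi y y = 1 by case: (Hphi y) => _ _ _ H; apply: H.
pose O y := phi y @^-1` [set r | 0 < r].
have oO y : open (O y) := open_comp (fun z _ => cphi y z) (@open_gt R 0).
have cov : [set: X] `<=` cover [set: X] O.
  by move=> z _; exists z => //; rewrite /O /= phi1 ltr01.
have [u _] := U0.
pose XP : ptopologicalType := HB.pack X (@isPointed.Build X u).
have hX' : @cover_compact XP [set: XP] by rewrite -compact_cover; exact: hX.
have [D _ HD] := hX' X setT O (fun i _ => oO i) cov.
pose S (z : X) := \sum_(y <- enum_fset D) (phi y z) ^+ 2.
have Spos z : 0 < S z.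
  have [y Dy Oyz] := HD z I.
  apply: (@lt_le_trans _ _ ((phi y z) ^+ 2)); first by rewrite exprn_gt0.
  apply: (@le_sum_mem _ _ _ (fun y => (phi y z) ^+ 2)) => //.
  by move=> j; rewrite sqr_ge0.
have cS : continuous S.
  by apply: sum_cont => j z; apply: (cvgM (cphi j z) (cphi j z)).
pose f (y z : X) := phi y z / Num.sqrt (S z).
have sqS z : 0 < Num.sqrt (S z) by rewrite sqrtr_gt0.
exists [seq (gy y, f y) | y <- enum_fset D]; split; first split.
- move=> p /In_map [y [_ ->]] /= z.
  have cq : continuous (fun z => Num.sqrt (S z)).
    by move=> w; apply: continuous_comp (cS w) (@sqrt_continuous R (S w)).
  exact: (cvgM (cphi y z) (cvgV (lt0r_neq0 (sqS z)) (cq z))).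
- move=> p /In_map [y [_ ->]] /= z.
  by apply: divr_ge0; [case/andP: (phi01 y z) | exact: ltW].
- move=> p /In_map [y [_ ->]] /=; exists y.
  by rewrite /f phi1 mul1r invr_eq0 gt_eqF.
- move=> z; rewrite big_map /=.
  under eq_bigr do rewrite /f expr_div_n sqr_sqrtr ?ltW //.
  rewrite -mulr_suml divff //; exact: lt0r_neq0 (Spos z).
- move=> p /In_map [y [_ ->]] z /= fz.
  have : W y z.
    apply: contrapT => nW; move: fz; rewrite /f phi0 // mul0r eqxx //.
  by [].
Qed.
Lemma sum_cont_In (R : realType) (X : topologicalType) (J : Type) (s : seq J)
  (F : J -> X -> R) : (forall j, List.In j s -> continuous (F j)) ->
  continuous (fun z => \sum_(j <- s) F j z).
Proof.
elim: s => [|a s IH] cF.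
  under eq_fun do rewrite big_nil. by move=> z; apply: cvg_cst.
under eq_fun do rewrite big_cons.
move=> z; apply: (cvgD (cF a (or_introl erefl) z)).
by apply: IH => j Hj; apply: cF; right.
Qed.

Lemma norm_sum_In (R : realType) (T : Type) (s : seq T) (F A : T -> R) e :
  (forall p, List.In p s -> `|F p| <= e * A p) ->
  `|\sum_(p <- s) F p| <= e * \sum_(p <- s) A p.
Proof.
elim: s => [|a s IH] H; first by rewrite !big_nil normr0 mulr0.
rewrite !big_cons mulrDr; apply: le_trans (ler_normD _ _) _.
apply: lerD; first by apply: H; left.
by apply: IH => p Hp; apply: H; right.
Qed.

Lemma state_const (R : realType) (X : topologicalType) (nu : (X -> R) -> R) :
  is_state nu -> forall a : R, nu (fun _ => a) = a.
Proof.
case=> _ hs _ h1 a.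
have -> : (fun _ : X => a) = (fun y => a * (fun _ : X => (1 : R)) y).
  by apply: funext => y; rewrite mulr1.
by rewrite hs ?h1 ?mulr1 //; move=> z; apply: cvg_cst.
Qed.

Lemma state_bound (R : realType) (X : topologicalType) (nu : (X -> R) -> R) :
  is_state nu -> forall k, continuous k -> forall c : R,
  (forall y, `|k y| <= c) -> `|nu k| <= c.
Proof.
move=> hnu; have [ha hs hp h1] := hnu; move=> k ck c hk.
have cc : continuous (fun _ : X => c) by move=> z; apply: cvg_cst.
have cmk : continuous (fun y => (-1) * k y).
  by move=> z; apply: cvgM; [apply: cvg_cst | apply: ck].
have p1 : 0 <= nu (fun y => (fun _ => c) y + (fun y => (-1) * k y) y).
  apply: hp; first by move=> z; apply: cvgD; [apply: cc | apply: cmk].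
  by move=> y /=; rewrite mulN1r subr_ge0; apply: le_trans (ler_norm _) (hk y).
have p2 : 0 <= nu (fun y => (fun _ => c) y + k y).
  apply: hp; first by move=> z; apply: cvgD; [apply: cc | apply: ck].
  by move=> y /=; rewrite -lerBlDr sub0r; apply: le_trans (hk y); rewrite -normrN ler_norm.
rewrite ha // hs // (@state_const _ _ _ hnu) in p1.
rewrite ha // (@state_const _ _ _ hnu) in p2.
rewrite mulN1r subr_ge0 in p1.
rewrite -lerBlDr sub0r lerNl in p2.
by rewrite ler_norml p1 p2.
Qed.
Theorem mainTheorem11 (R : realType) (G : countType)
  (mul : G -> G -> G) (one : G) (inv : G -> G)
  (X : topologicalType) (act : G -> X -> X)
  (hG : is_group mul one inv)
  (hX : compact [set: X]) (hT : hausdorff_space X)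
  (hact : is_action_by_homeos mul one act)
  (hmin : minimal_action act)
  (x : X) :
  exists (D : Type) (le : D -> D -> Prop) (mu : D -> seq (G * (X -> R))),
    directed le /\
    (forall l, is_gen_prob_fin (mu l)) /\
    forall nu : (X -> R) -> R, is_state nu ->
    forall h : X -> R, continuous h ->
    forall eps : R, 0 < eps ->
    exists l0, forall l, le l0 l ->
      `| nu (gen_apply inv act (mu l) h) - h x | < eps.
Proof.
pose D := {U : set X | open U /\ U x}.
have hmu : forall l : D, exists mu : seq (G * (X -> R)), is_gen_prob_fin mu /\
   (forall p, List.In p mu -> forall y, p.2 y != 0 -> (proj1_sig l) (act (inv p.1) y)).
  move=> [U [oU Ux]] /=; apply: (@pou R G mul one inv X act hG hX hT hact hmin U oU).
  by exists x.
have [mu Hmu] := choice hmu.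
have hcont : forall g, continuous (act g) by case: hact.
exists D, (fun a b => proj1_sig b `<=` proj1_sig a), mu; split; [|split].
- split.
  + by constructor; exists setT; split; [exact: openT | by []].
  + by move=> a z.
  + by move=> a b c ab bc; apply: subset_trans bc ab.
  + move=> [a [oa ax]] [b [ob bx]].
    by exists (exist _ (a `&` b) (conj (openI oa ob) (conj ax bx))); split => /= z [].
- by move=> l; case: (Hmu l).
move=> nu hnu h ch eps eps0.
have e2 : 0 < eps / 2 by rewrite divr_gt0.
pose U0 := h @^-1` ball (h x) (eps / 2).
have oU0 : open U0 := open_comp (fun z _ => ch z) (ball_open (h x) (eps / 2)).
have U0x : U0 x by apply: ballxx.
exists (exist _ U0 (conj oU0 U0x)) => l /= Hl.
have [[cf f0 fnz f1] supp] := Hmu l.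
pose g := gen_apply inv act (mu l) h.
have cg : continuous g.
  apply: sum_cont_In => p Hp z.
  apply: cvgM; first by apply: cvgM; apply: cf.
  by apply: continuous_comp; [apply: hcont | apply: ch].
pose k := fun y => g y - h x.
have ck : continuous k by move=> z; apply: cvgD; [apply: cg | apply: cvg_cst].
have kb : forall y, `|k y| <= eps / 2.
  move=> y; rewrite /k /g /gen_apply.
  have hx1 : h x = \sum_(p <- mu l) (p.2 y) ^+ 2 * h x by rewrite -mulr_suml f1 mul1r.
  rewrite [in X in `|X|]hx1 -sumrB.
  have -> : eps / 2 = eps / 2 * \sum_(p <- mu l) (p.2 y) ^+ 2 by rewrite f1 mulr1.
  apply: norm_sum_In => p Hp.
  rewrite -mulrBr normrM ger0_norm ?sqr_ge0 // mulrC.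
  have [->|nz] := eqVneq (p.2 y) 0; first by rewrite expr0n /= !mulr0.
  apply: ler_wpM2r; first by rewrite sqr_ge0.
  have H := Hl _ (supp p Hp y nz).
  move: H; rewrite /U0 /ball /= => H. by rewrite distrC ltW.
have -> : nu g = nu k + h x.
  have -> : g = (fun y => k y + (fun _ => h x) y).
    by apply: funext => y; rewrite /k subrK.
  case: (hnu) => hadd _ _ _; rewrite hadd // ?(@state_const _ _ _ hnu) //.
  by move=> z; apply: cvg_cst.
rewrite addrK; apply: le_lt_trans (@state_bound _ _ _ hnu _ ck _ kb) _.
by rewrite ltr_pdivrMr // ltr_pMr // ltr1n.
Qed.
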